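(* Let $X$ be a normed space with unit sphere $S_X$ and closed unit ball $B_X$, and kernel $k(x,y)=\|x-y\|$. Then $q(S_X,S_X)=q(S_X,B_X)$ and $\overline{M}(S_X,S_X)=\overline{M}(S_X,B_X)$.
   Context: For $H,L\subset X$: $U^\mu(x)=\int\|x-y\|\,d\mu(y)$; $q(H,L):=\inf_{\mu\in\mathfrak{M}_1(H)}\sup_{x\in L}U^\mu(x)$, where $\mathfrak{M}_1(H)$ is the set of regular Borel probability measures on $X$ (norm topology) concentrated on $H$; $\overline{M}_n(H,L):=\inf_{w_1,\dots,w_n\in H}\sup_{x\in L}\frac1n\sum_{j=1}^n\|x-w_j\|$ and $\overline{M}(H,L):=\lim_{n\to\infty}\overline{M}_n(H,L)=\inf_n\overline{M}_n(H,L)$. *)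

(* Defs.v *)
From HB Require Import structures.
From mathcomp Require Import all_boot all_order all_algebra.
From mathcomp Require Import all_classical all_reals all_analysis.
Set Implicit Arguments. Unset Strict Implicit. Unset Printing Implicit Defensive.
Import Order.TTheory GRing.Theory Num.Theory.
Import numFieldNormedType.Exports.
Local Open Scope classical_set_scope.
Local Open Scope ring_scope.

Section Defs.
Variables (R : realType) (X : normedModType R).

Definition borel_space : Type := g_sigma_algebraType (@open X).
Definition borel_display := sigma_display (@open X).

Definition unit_sphere : set X := [set x | `|x| = 1].
Definition unit_ball : set X := [set x | `|x| <= 1].

Definition regular_measure (mu : probability borel_space R) : Prop :=
  forall A : set borel_space, measurable A ->
    mu A = ereal_sup [set mu K | K in [set K : set borel_space |
                         @compact X K /\ K `<=` A]] /\
    mu A = ereal_inf [set mu U | U in [set U : set borel_space |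
                         @open X U /\ A `<=` U]].

Definition M1 (H : set X) : set (probability borel_space R) :=
  [set mu | regular_measure mu /\ mu (H : set borel_space) = 1%E].

Definition potential (mu : probability borel_space R) (x : X) : \bar R :=
  (\int[mu]_y (`|x - (y : X)|)%:E)%E.

Definition sup_potential (L : set X) (mu : probability borel_space R) : \bar R :=
  ereal_sup [set potential mu x | x in L].

Definition q (H L : set X) : \bar R :=
  ereal_inf [set sup_potential L mu | mu in M1 H].

Definition sup_mean (n : nat) (L : set X) (w : 'I_n -> X) : \bar R :=
  ereal_sup [set ((n%:R)^-1 * \sum_(j < n) `|x - w j|)%:E | x in L].

Definition Mbar_n (n : nat) (H L : set X) : \bar R :=
  ereal_inf [set sup_mean L w | w in [set w : 'I_n -> X | forall j, H (w j)]].

(* \overline{M}(H,L) = lim_n M_n = inf_{n>=1} M_n *)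
Definition Mbar (H L : set X) : \bar R :=
  ereal_inf [set Mbar_n n.+1 H L | n in [set: nat]].
End Defs.

(* Main.v *)
Require Import Defs.
From HB Require Import structures.
From mathcomp Require Import all_boot all_order all_algebra.
From mathcomp Require Import all_classical all_reals all_analysis.
From mathcomp Require Import measurable_realfun ring lra.
Set Implicit Arguments. Unset Strict Implicit. Unset Printing Implicit Defensive.
Import Order.TTheory GRing.Theory Num.Theory.
Import numFieldNormedType.Exports.
Local Open Scope classical_set_scope.
Local Open Scope ring_scope.

Lemma mes_cont (R : realType) (X : normedModType R) (g : X -> R) :
  continuous g ->
  measurable_fun (T := borel_space X) (U := measurable_realfun.constructive_ereal_extended__canonical__measurable_structure_SigmaRing R) setT (fun y : borel_space X => (g y)%:E).
Proof.
move=> c.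
apply/measurable_EFinP.
apply: (measurability _ (RGenOpens.measurableE R)).
move=> _ [_ [u [v ->] <-]].
apply: sub_sigma_algebra.
rewrite setTI.
have : open [set` `]u, v[%R] by exact: interval_open.
move: [set` `]u, v[%R] => B oB.
exact: (continuousP _).1 c B oB.
Qed.

Lemma cont_norm (R : realType) (X : normedModType R) (a : X) (l : R) :
  continuous (fun y : X => l * `|a - y|).
Proof.
move=> y; apply: cvgM; first exact: cvg_cst.
apply: cvg_norm; apply: cvgB; [exact: cvg_cst | exact: cvg_id].
Qed.

Lemma pot_convex (R : realType) (X : normedModType R)
  (mu : probability (borel_space X) R) (a b : X) (l : R) :
  0 <= l <= 1 ->
  (potential mu (l *: a + (1 - l) *: b)%R <=
   l%:E * potential mu a + (1 - l)%:E * potential mu b)%E.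
Proof.
move=> /andP[l0 l1].
have l1' : 0 <= 1 - l by rewrite subr_ge0.
rewrite /potential.
have mn : forall (c : X) (k : R), measurable_fun (T := borel_space X) (U := measurable_realfun.constructive_ereal_extended__canonical__measurable_structure_SigmaRing R) setT (fun y : borel_space X => (k * `|c - (y : X)|)%:E).
  by move=> c k; apply: mes_cont; apply: cont_norm.
have mn1 : forall (c : X), measurable_fun (T := borel_space X) (U := measurable_realfun.constructive_ereal_extended__canonical__measurable_structure_SigmaRing R) setT (fun y : borel_space X => (`|c - (y : X)|)%:E).
  by move=> c; apply: eq_measurable_fun (mn c 1) => y _; rewrite mul1r.
have E : (\int[mu]_y ((l * `|a - (y : X)|)%:E + ((1 - l) * `|b - (y : X)|)%:E) =
   l%:E * \int[mu]_y (`|a - (y : X)|)%:E + (1 - l)%:E * \int[mu]_y (`|b - (y : X)|)%:E)%E.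
  rewrite ge0_integralD //; last first.
  - by move=> y _; rewrite lee_fin mulr_ge0.
  - by move=> y _; rewrite lee_fin mulr_ge0.
  by congr (_ + _)%E; rewrite -ge0_integralZl // ?lee_fin.
rewrite -E.
apply: ge0_le_integral => //.
  by apply: emeasurable_funD; [exact: mn | exact: mn].
move=> y _; rewrite -EFinD lee_fin.
have -> : l *: a + (1 - l) *: b - y = l *: (a - y) + (1 - l) *: (b - y).
  have hy : y = l *: y + (1 - l) *: y by rewrite -scalerDl addrC subrK scale1r.
  by rewrite !scalerBr {1}hy opprD addrACA.
apply: (le_trans (ler_normD _ _)).
by rewrite !normrZ !ger0_norm.
Qed.

Lemma comb_le (R : realType) (e1 e2 s : \bar R) (l : R) :
  (0 <= e1)%E -> (0 <= e2)%E -> (e1 <= s)%E -> (e2 <= s)%E -> 0 <= l <= 1 ->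
  (l%:E * e1 + (1 - l)%:E * e2 <= s)%E.
Proof.
move=> h1 h2 h1s h2s /andP[l0 l1].
case: s h1s h2s => [r| |] h1s h2s; last 2 first.
- exact: leey.
- by have := le_trans h1 h1s; rewrite leeNy_eq.
case: e1 h1 h1s => [r1| |] h1 h1s; last 2 first.
- by [].
- by [].
case: e2 h2 h2s => [r2| |] h2 h2s; last 2 first.
- by [].
- by [].
rewrite -!EFinM -EFinD lee_fin.
rewrite lee_fin in h1s h2s.
have -> : r = l * r + (1 - l) * r by ring.
by apply: lerD; apply: ler_wpM2l => //; rewrite subr_ge0.
Qed.

Lemma sup_ball_le (R : realType) (X : normedModType R) (F : X -> \bar R) (u : X) :
  `|u| = 1 -> (forall x, 0 <= F x)%E ->
  (forall a b (l : R), 0 <= l <= 1 -> (F (l *: a + (1 - l) *: b)%R <= l%:E * F a + (1 - l)%:E * F b)%E) ->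
  (ereal_sup (F @` (@unit_ball R X)) <= ereal_sup (F @` (@unit_sphere R X)))%E.
Proof.
move=> hu F0 Fc.
apply: ge_ereal_sup => _ [x xb <-].
set v : X := if x == 0 then u else `|x|^-1 *: x.
have nv : `|v| = 1.
  rewrite /v; case: eqP => // /eqP x0.
  by rewrite normrZ normfV normr_id mulVf // normr_eq0.
have xv : x = `|x| *: v.
  rewrite /v; case: eqP => [->|/eqP x0]; first by rewrite normr0 scale0r.
  by rewrite scalerA mulfV ?scale1r // normr_eq0.
set l := (1 + `|x|) / 2.
have l01 : 0 <= l <= 1.
  rewrite /unit_ball /= in xb.
  have := normr_ge0 x; rewrite /l => ?.
  by apply/andP; split; lra.
have hx : x = l *: v + (1 - l) *: (- v).
  rewrite scalerN -scalerBl {1}xv; congr (_ *: _).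
  by rewrite /l; field.
rewrite hx.
apply: (le_trans (Fc _ _ _ l01)).
apply: comb_le => //; apply: ereal_sup_ubound; [exists v | exists (- v)] => //.
by rewrite /unit_sphere /= normrN.
Qed.

Lemma norm_conv (R : realType) (X : normedModType R) (a b y : X) (l : R) :
  0 <= l <= 1 -> `|l *: a + (1 - l) *: b - y| <= l * `|a - y| + (1 - l) * `|b - y|.
Proof.
move=> /andP[l0 l1].
have l1' : 0 <= 1 - l by rewrite subr_ge0.
have -> : l *: a + (1 - l) *: b - y = l *: (a - y) + (1 - l) *: (b - y).
  have hy : y = l *: y + (1 - l) *: y by rewrite -scalerDl addrC subrK scale1r.
  by rewrite !scalerBr {1}hy opprD addrACA.
apply: (le_trans (ler_normD _ _)).
by rewrite !normrZ !ger0_norm.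
Qed.

Lemma sphere_ne (R : realType) (X : normedModType R) (x : X) :
  @unit_sphere R X x -> exists u : X, `|u| = 1.
Proof. by move=> h; exists x. Qed.

Theorem corollary3p8 (R : realType) (X : normedModType R) :
  q (@unit_sphere R X) (@unit_sphere R X) = q (@unit_sphere R X) (@unit_ball R X) /\
  Mbar (@unit_sphere R X) (@unit_sphere R X) = Mbar (@unit_sphere R X) (@unit_ball R X).
Proof.
have sub : @unit_sphere R X `<=` @unit_ball R X.
  by move=> x; rewrite /unit_sphere /unit_ball /= => ->.
split.
  rewrite /q; congr ereal_inf; apply: eq_imagel => mu [_ mu1].
  have [u hu] : exists u : X, `|u| = 1.
    apply: contrapT => nex.
    have e : (@unit_sphere R X : set (borel_space X)) = set0.
      by apply/seteqP; split => // x /= hx; apply: nex; exists x.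
    by move: mu1; rewrite e measure0 => /esym/eqP; rewrite eqe oner_eq0.
  apply/le_anti/andP; split.
    by apply: ereal_sup_le; apply: image_subset.
  apply: (sup_ball_le (u := u)) => //.
    by move=> x; apply: integral_ge0 => y _; rewrite lee_fin.
  by move=> a b l hl; apply: pot_convex.
rewrite /Mbar; congr ereal_inf; apply: eq_imagel => n _.
rewrite /Mbar_n; congr ereal_inf; apply: eq_imagel => w hw.
have hu : `|w ord0| = 1 by apply: hw.
rewrite /sup_mean.
apply/le_anti/andP; split.
  by apply: ereal_sup_le; apply: image_subset.
have c0 : 0 <= (n.+1%:R : R)^-1 by rewrite invr_ge0.
apply: (sup_ball_le (u := w ord0)) => //.
  by move=> x; rewrite lee_fin mulr_ge0 // sumr_ge0.
move=> a b l hl.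
have /andP[l0 l1] := hl.
rewrite -!EFinM -EFinD lee_fin.
apply: (le_trans (y := (n.+1%:R)^-1 * \sum_(j < n.+1) (l * `|a - w j| + (1 - l) * `|b - w j|))).
  by apply: ler_wpM2l => //; apply: ler_sum => j _; apply: norm_conv.
rewrite big_split /= -!mulr_sumr.
by rewrite le_eqVlt; apply/orP; left; apply/eqP; ring.
Qed.
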